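(* Let $\mathcal{X}\subset\mathbb{R}^n$ be a closed convex set, $P$ a probability distribution on a sample space $\mathcal{S}$, $f:\mathcal{X}\times\mathcal{S}\to\mathbb{R}$ such that $f(\cdot;s)$ is $\rho(s)$-weakly convex for each $s$, and $F(x)=\mathbb{E}_P[f(x;S)]$ with $\mathcal{X}^\star=\arg\min_{x\in\mathcal{X}}F(x)$ nonempty. Suppose $F$ is easy to optimize: for each $x^\star\in\mathcal{X}^\star$ and $P$-almost every $s$, $\inf_{x\in\mathcal{X}}f(x;s)=f(x^\star;s)$. Let $x_k$ be generated by the model-based iteration using a model satisfying (C.i)–(C.iv). Then for any $x^\star\in\mathcal{X}^\star$, $$\|x_{k+1}-x^\star\|_2^2\le(1+\alpha_k\rho(S_k))\|x_k-x^\star\|_2^2-[f(x_k;S_k)-f(x^\star;S_k)]\min\Big\{\alpha_k,\frac{f(x_k;S_k)-f(x^\star;S_k)}{\|f'(x_k;S_k)\|_2^2}\Big\}.$$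
   Context: A function $g$ is $\rho$-weakly convex if $x\mapsto g(x)+\frac{\rho}{2}\|x\|_2^2$ is convex. $\partial$ denotes the Fréchet subdifferential and $f'(x;s)$ an element of $\partial f(x;s)$. A model is a family $f_x(\cdot;s):\mathcal{X}\to\mathbb{R}$ with: (C.i) $y\mapsto f_x(y;s)$ convex and subdifferentiable; (C.ii) $f_x(y;s)\le f(y;s)+\frac{\rho(s)}{2}\|y-x\|_2^2$ for all $y\in\mathcal{X}$; (C.iii) $f_x(x;s)=f(x;s)$ and $\partial_y f_x(y;s)|_{y=x}\subset\partial_x f(x;s)$; (C.iv) $f_x(y;s)\ge\inf_{z\in\mathcal{X}}f(z;s)$. The iteration: $S_1,S_2,\ldots$ i.i.d. from $P$, $x_1\in\mathcal{X}$, stepsizes $\alpha_k>0$, $x_{k+1}=\arg\min_{x\in\mathcal{X}}\{f_{x_k}(x;S_k)+\frac{1}{2\alpha_k}\|x-x_k\|_2^2\}$. *)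

(* Defs.v *)
From HB Require Import structures.
From mathcomp Require Import all_boot all_order all_algebra.
From mathcomp Require Import all_classical all_reals all_analysis.
Set Implicit Arguments. Unset Strict Implicit. Unset Printing Implicit Defensive.
Import Order.TTheory GRing.Theory Num.Theory.
Import numFieldTopology.Exports numFieldNormedType.Exports.
Local Open Scope classical_set_scope.
Local Open Scope ring_scope.

Definition dotv {R : realType} {n : nat} (u v : 'rV[R]_n) : R :=
  \sum_(i < n) u ord0 i * v ord0 i.
Definition sqnorm2 {R : realType} {n : nat} (v : 'rV[R]_n) : R := dotv v v.
Definition norm2 {R : realType} {n : nat} (v : 'rV[R]_n) : R := Num.sqrt (sqnorm2 v).

Definition convex_on {R : realType} {n : nat} (X : set 'rV[R]_n)
  (h : 'rV[R]_n -> R) : Prop :=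
  forall x y t, X x -> X y -> 0 <= t <= 1 ->
    h (t *: x + (1 - t) *: y) <= t * h x + (1 - t) * h y.

Definition weakly_convex_on {R : realType} {n : nat} (X : set 'rV[R]_n)
  (rho : R) (h : 'rV[R]_n -> R) : Prop :=
  convex_on X (fun x => h x + rho / 2 * sqnorm2 x).

Definition frechet_subdiff {R : realType} {n : nat} (X : set 'rV[R]_n)
  (h : 'rV[R]_n -> R) (x : 'rV[R]_n) : set 'rV[R]_n :=
  [set g | X x /\
     forall eps : R, 0 < eps -> exists2 delta : R, 0 < delta &
       forall y, X y -> norm2 (y - x) < delta ->
         h x + dotv g (y - x) - eps * norm2 (y - x) <= h y].

Definition is_argmin {R : realType} {n : nat} (X : set 'rV[R]_n)
  (phi : 'rV[R]_n -> R) (z : 'rV[R]_n) : Prop :=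
  X z /\ forall y, X y -> phi z <= phi y.

Definition inf_over {R : realType} {n : nat} (X : set 'rV[R]_n)
  (h : 'rV[R]_n -> R) : \bar R :=
  ereal_inf [set (h z)%:E | z in X].

(* Model conditions (C.i)-(C.iv) for fm x y s = f_x(y;s). *)
Definition is_model {R : realType} {n : nat} {T : Type} (X : set 'rV[R]_n)
  (f : 'rV[R]_n -> T -> R) (rho : T -> R)
  (fm : 'rV[R]_n -> 'rV[R]_n -> T -> R) : Prop :=
  forall x s, X x ->
    (convex_on X (fun y => fm x y s) /\
     forall y, X y -> exists g, frechet_subdiff X (fun y => fm x y s) y g) /\
    (forall y, X y -> fm x y s <= f y s + rho s / 2 * sqnorm2 (y - x)) /\
    (fm x x s = f x s /\
     frechet_subdiff X (fun y => fm x y s) x `<=` frechet_subdiff X (fun y => f y s) x) /\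
    (forall y, X y -> (inf_over X (fun z => f z s) <= (fm x y s)%:E)%E).

Definition iid_with_law {d d' : measure_display} {R : realType}
  {Omega : measurableType d} {T : measurableType d'}
  (Q : probability Omega R) (S : nat -> Omega -> T) (P : probability T R) : Prop :=
  (forall k, measurable_fun setT (S k)) /\
  (forall k A, (1 <= k)%N -> measurable A -> Q (S k @^-1` A) = P A) /\
  (forall (I : seq nat) (A : nat -> set T), uniq I -> all (fun i => 1 <= i)%N I ->
     (forall i, measurable (A i)) ->
     Q (\bigcap_(i in [set` I]) (S i @^-1` A i)) = (\prod_(i <- I) Q (S i @^-1` A i))%E).

Definition expected_obj {d : measure_display} {R : realType} {n : nat}
  {T : measurableType d} (P : probability T R) (f : 'rV[R]_n -> T -> R)
  (x : 'rV[R]_n) : \bar R :=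
  (\int[P]_s (f x s)%:E)%E.

Definition solution_set {d : measure_display} {R : realType} {n : nat}
  {T : measurableType d} (X : set 'rV[R]_n) (P : probability T R)
  (f : 'rV[R]_n -> T -> R) : set 'rV[R]_n :=
  [set xs | X xs /\ forall y, X y -> (expected_obj P f xs <= expected_obj P f y)%E].

(* Main.v *)
Require Import Defs.
From HB Require Import structures.
From mathcomp Require Import all_boot all_order all_algebra.
From mathcomp Require Import all_classical all_reals all_analysis.
From mathcomp Require Import ring lra.
Import Order.TTheory GRing.Theory Num.Theory.
Import numFieldTopology.Exports numFieldNormedType.Exports.
Local Open Scope classical_set_scope.
Local Open Scope ring_scope.

Section V.
Context {R : realType} {n : nat}.
Implicit Types u v w : 'rV[R]_n.

Lemma dotvC u v : dotv u v = dotv v u.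
Proof. by apply: eq_bigr => i _; rewrite mulrC. Qed.
Lemma dotvDl u v w : dotv (u + v) w = dotv u w + dotv v w.
Proof. by rewrite /dotv -big_split; apply: eq_bigr => i _; rewrite mxE mulrDl. Qed.
Lemma dotvZl a u v : dotv (a *: u) v = a * dotv u v.
Proof. by rewrite /dotv mulr_sumr; apply: eq_bigr => i _; rewrite mxE mulrA. Qed.
Lemma dotvNl u v : dotv (- u) v = - dotv u v.
Proof. by rewrite -scaleN1r dotvZl mulN1r. Qed.
Lemma dotvBl u v w : dotv (u - v) w = dotv u w - dotv v w.
Proof. by rewrite dotvDl dotvNl. Qed.
Lemma dotvDr u v w : dotv w (u + v) = dotv w u + dotv w v.
Proof. by rewrite dotvC dotvDl !(dotvC w). Qed.
Lemma dotvZr a u v : dotv v (a *: u) = a * dotv v u.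
Proof. by rewrite dotvC dotvZl dotvC. Qed.
Lemma dotvNr u v : dotv v (- u) = - dotv v u.
Proof. by rewrite dotvC dotvNl dotvC. Qed.
Lemma dotv0l v : dotv 0 v = 0.
Proof. by rewrite -(scale0r (0 : 'rV[R]_n)) dotvZl mul0r. Qed.
Lemma sqnorm2_ge0 u : 0 <= sqnorm2 u.
Proof. by apply: sumr_ge0 => i _; rewrite -expr2 sqr_ge0. Qed.
Lemma sqnorm2D u v : sqnorm2 (u + v) = sqnorm2 u + 2 * dotv u v + sqnorm2 v.
Proof. rewrite /sqnorm2 dotvDl !dotvDr (dotvC v u); ring. Qed.
Lemma sqnorm2Z a u : sqnorm2 (a *: u) = a ^+ 2 * sqnorm2 u.
Proof. rewrite /sqnorm2 dotvZl dotvZr; ring. Qed.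
Lemma sqnorm2N u : sqnorm2 (- u) = sqnorm2 u.
Proof. by rewrite -scaleN1r sqnorm2Z sqrrN expr1n mul1r. Qed.
Lemma sqnorm2_sym u v : sqnorm2 (u - v) = sqnorm2 (v - u).
Proof. by rewrite -opprB sqnorm2N. Qed.
Lemma norm2Z a u : 0 <= a -> norm2 (a *: u) = a * norm2 u.
Proof.
by move=> a0; rewrite /norm2 sqnorm2Z sqrtrM ?sqr_ge0 // sqrtr_sqr ger0_norm.
Qed.
Lemma norm2_ge0 u : 0 <= norm2 u.
Proof. exact: sqrtr_ge0. Qed.

Lemma cs u v : 0 < sqnorm2 u -> dotv u v ^+ 2 <= sqnorm2 u * sqnorm2 v.
Proof.
move=> G0.
set G := sqnorm2 u; set t := dotv u v; set D := sqnorm2 v.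
have := sqnorm2_ge0 (G *: v - t *: u).
rewrite sqnorm2D sqnorm2Z sqnorm2N sqnorm2Z dotvNr dotvZl dotvZr -/G -/t -/D.
have -> : G ^+ 2 * D + 2 * - (G * (t * dotv v u)) + t ^+ 2 * G
   = G * (G * D - t ^+ 2) by rewrite (dotvC v u) -/t; ring.
rewrite pmulr_rge0 //; lra.
Qed.
End V.

Lemma convX (R : realType) n (X : set 'rV[R]_n) x y t :
  convex_set X -> X x -> X y -> 0 <= t <= 1 -> X (t *: x + (1 - t) *: y).
Proof.
move=> cX Xx Xy /andP[t0 t1].
have P : Itv.spec (@Itv.num_sem R) (Itv.Real `[0%Z, 1%Z]) t.
  by rewrite /Itv.num_sem /= num_real /= in_itv /= t0 t1.
have := cX x y (Itv.mk P).
rewrite !inE => /(_ Xx Xy).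
by rewrite /conv /=.
Qed.
Lemma alg1 (R : realType) (a gap m D t G : R) :
  0 < a -> 0 <= gap -> 0 <= m -> gap + t <= m -> 0 <= D -> 0 < G -> t^+2 <= G * D ->
  a * G <= gap -> a * gap <= 2 * a * m + D.
Proof.
move=> a0 g0 m0 gt D0 G0 tGD aG.
have h1 : 0 <= G * (a * gap + 2 * a * t + D).
  have h2 : 0 <= (a * G + t) ^+ 2 by apply: sqr_ge0.
  have h3 : a * G * (a * G) <= a * G * gap by apply: ler_wpM2l; nra.
  nra.
have h4 : 0 <= a * gap + 2 * a * t + D by rewrite -(pmulr_rge0 _ G0).
nra.
Qed.

Lemma alg2 (R : realType) (a gap m D t G : R) :
  0 < a -> 0 <= gap -> 0 <= m -> gap + t <= m -> 0 <= D -> 0 < G -> t^+2 <= G * D ->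
  gap < a * G -> gap * gap <= G * (2 * a * m + D).
Proof.
move=> a0 g0 m0 gt D0 G0 tGD aG.
have h1 : gap * m <= a * G * m by apply: ler_wpM2r => //; lra.
have h2 : gap * (gap + t) <= gap * m by apply: ler_wpM2l.
have h3 : 0 <= (gap + t) ^+ 2 by apply: sqr_ge0.
nra.
Qed.

Lemma eps_lemma (R : realType) (a b c : R) : 0 <= c ->
  (forall eps, 0 < eps -> a - eps * c <= b) -> a <= b.
Proof.
move=> c0 H; rewrite leNgt; apply/negP => ba.
have e0 : 0 < (a - b) / (c + 1) by apply: divr_gt0; lra.
have := H _ e0.
have -> : (a - b) / (c + 1) * c = (a - b) - (a - b) / (c + 1).
  by field; lra.
lra.
Qed.

Lemma t_lemma (R : realType) (A B : R) :
  (forall t, 0 < t -> t < 1 -> 0 <= A + t * B) -> 0 <= A.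
Proof.
move=> H; rewrite leNgt; apply/negP => A0.
have [B0|B0] := lerP B 0.
  have := H (1/2) ltac:(lra) ltac:(lra). nra.
pose t := Num.min (1/2) (- A / (2 * B)).
have t1 : t <= 1/2 by rewrite /t ge_min lexx.
have t2 : t <= - A / (2 * B) by rewrite /t ge_min lexx orbT.
have t0 : 0 < t by rewrite /t lt_min; apply/andP; split; [lra| apply: divr_gt0; lra].
have := H t t0 ltac:(lra).
have : t * B <= - A / 2.
  have -> : - A / 2 = - A / (2 * B) * B by field; lra.
  by rewrite ler_pM2r.
lra.
Qed.

Lemma subgrad_global (R : realType) n (X : set 'rV[R]_n) (h : 'rV[R]_n -> R) x y g :
  convex_set X -> convex_on X h -> X x -> X y -> frechet_subdiff X h x g ->
  h x + dotv g (y - x) <= h y.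
Proof.
move=> cX hc Xx Xy [_ Hf].
set d := y - x; set N := norm2 d.
have N0 : 0 <= N := norm2_ge0 d.
suff : dotv g d <= h y - h x by lra.
apply: (@eps_lemma _ _ _ N N0) => eps e0.
have [delta d0 Hd] := Hf eps e0.
pose t := Num.min (1/2) (delta / (2 * (N + 1))).
have t1 : t <= 1/2 by rewrite /t ge_min lexx.
have t2 : t <= delta / (2 * (N + 1)) by rewrite /t ge_min lexx orbT.
have t0 : 0 < t by rewrite /t lt_min; apply/andP; split; [lra| apply: divr_gt0; lra].
have Xz := @convX _ _ X y x t cX Xy Xx ltac:(apply/andP; split; lra).
have ez : t *: y + (1 - t) *: x - x = t *: d.
  by apply/rowP => i; rewrite !mxE; ring.
have H := Hd _ Xz; rewrite ez norm2Z in H; last exact: ltW.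
have tN : t * N < delta.
  have : t * N <= delta / (2 * (N + 1)) * N by apply: ler_wpM2r.
  have : delta / (2 * (N + 1)) * N < delta.
    rewrite mulrAC ltr_pdivrMr; last lra.
    nra.
  lra.
have := H tN; rewrite dotvZr.
have := hc y x t Xy Xx ltac:(apply/andP; split; lra).
move=> h1 h2; rewrite -/N in h2.
have h3 : t * (dotv g d - eps * N) <= t * (h y - h x) by rewrite mulrBr mulrBr; lra.
by move: h3; rewrite ler_pM2l.
Qed.

Lemma three_point (R : realType) n (X : set 'rV[R]_n) (h : 'rV[R]_n -> R) x y z a :
  convex_set X -> convex_on X h -> 0 < a -> X z ->
  is_argmin X (fun w => h w + 1 / (2 * a) * sqnorm2 (w - x)) y ->
  h y + 1 / (2 * a) * sqnorm2 (y - x) + 1 / (2 * a) * sqnorm2 (z - y)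
    <= h z + 1 / (2 * a) * sqnorm2 (z - x).
Proof.
move=> cX hc a0 Xz [Xy Hmin].
set D := sqnorm2 (y - x); set Q := sqnorm2 (z - y); set p := dotv (y - x) (z - y).
have ezx : z - x = (y - x) + (z - y) by apply/rowP => i; rewrite !mxE; ring.
have Ezx : sqnorm2 (z - x) = D + 2 * p + Q by rewrite ezx sqnorm2D.
suff : 0 <= h z - h y + p / a.
  rewrite Ezx => H.
  have -> : 1 / (2 * a) * (D + 2 * p + Q) = 1 / (2 * a) * D + 1 / (2 * a) * Q + p / a.
    by field; lra.
  lra.
apply: (@t_lemma _ _ (Q / (2 * a))) => t t0 t1.
have Xzt := @convX _ _ X z y t cX Xz Xy ltac:(apply/andP; split; lra).
have := Hmin _ Xzt.
have ez : t *: z + (1 - t) *: y - x = (y - x) + t *: (z - y).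
  by apply/rowP => i; rewrite !mxE; ring.
rewrite ez [sqnorm2 (_ + t *: _)]sqnorm2D sqnorm2Z dotvZr -/D -/Q -/p.
have := hc z y t Xz Xy ltac:(apply/andP; split; lra).
move=> h1 h2.
have h3 : 0 <= t * (h z - h y + p / a + t * (Q / (2 * a))).
  have -> : t * (h z - h y + p / a + t * (Q / (2 * a)))
     = t * h z + (1 - t) * h y - h y
       + (1 / (2 * a) * (D + 2 * (t * p) + t ^+ 2 * Q) - 1 / (2 * a) * D).
    by field; lra.
  lra.
by move: h3; rewrite pmulr_rge0.
Qed.

Lemma key (R : realType) n (X : set 'rV[R]_n) (h : 'rV[R]_n -> R) x y xs g a rho fx fxs :
  convex_set X -> convex_on X h -> X x -> X y -> X xs -> 0 < a ->
  frechet_subdiff X h x g ->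
  is_argmin X (fun z => h z + 1 / (2 * a) * sqnorm2 (z - x)) y ->
  h xs <= fxs + rho / 2 * sqnorm2 (xs - x) ->
  h x = fx -> fxs <= h y -> fxs <= fx ->
  sqnorm2 (y - xs) <= (1 + a * rho) * sqnorm2 (x - xs)
     - (fx - fxs) * (if g == 0 then a else Num.min a ((fx - fxs) / sqnorm2 g)).
Proof.
move=> cX hc Xx Xy Xxs a0 Hg Hy Hxs hx fy fx0.
have T := @three_point _ _ X h x y xs a cX hc a0 Xxs Hy.
have Sg := @subgrad_global _ _ X h x y g cX hc Xx Xy Hg.
rewrite (sqnorm2_sym xs x) in Hxs T; rewrite (sqnorm2_sym xs y) in T.
set D := sqnorm2 (y - x) in T *; set t := dotv g (y - x) in Sg *.
set A := sqnorm2 (x - xs) in Hxs T *; set B := sqnorm2 (y - xs) in T *.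
have D0 : 0 <= D by apply: sqnorm2_ge0.
have e1 : 2 * a * (h y + 1 / (2 * a) * D + 1 / (2 * a) * B) = 2 * a * h y + D + B.
  by field; lra.
have e2 : 2 * a * (h xs + 1 / (2 * a) * A) = 2 * a * h xs + A.
  by field; lra.
have T' := ler_wpM2l (ltW (mulr_gt0 (ltr0Sn _ 1) a0)) T.
rewrite e1 e2 in T'.
have Hxs' : a * h xs <= a * (fxs + rho / 2 * A) by apply: ler_wpM2l => //; exact: ltW.
have basic : B <= (1 + a * rho) * A - (2 * a * (h y - fxs) + D).
  move: Hxs'; have -> : a * (fxs + rho / 2 * A) = a * fxs + a * rho * A / 2 by field.
  move=> Hxs'. lra.
suff : (fx - fxs) * (if g == 0 then a else Num.min a ((fx - fxs) / sqnorm2 g))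
        <= 2 * a * (h y - fxs) + D by lra.
have m0 : 0 <= h y - fxs by lra.
have gm : (fx - fxs) + t <= h y - fxs by lra.
have gap0 : 0 <= fx - fxs by lra.
case: eqP => [g0|gn0].
  have t0 : t = 0 by rewrite /t g0 dotv0l.
  rewrite t0 in gm.
  have : a * (fx - fxs) <= a * (h y - fxs) by apply: ler_wpM2l => //; [exact: ltW | lra].
  nra.
have := sqnorm2_ge0 g; rewrite le_eqVlt => /orP[/eqP G0|G0].
  rewrite -G0 invr0 mulr0 min_r ?(ltW a0) // mulr0.
  have : 0 <= a * (h y - fxs) by apply: mulr_ge0 => //; exact: ltW.
  lra.
have CS := @cs _ _ g (y - x) G0; rewrite -/t -/D in CS.
have [aGle|aGgt] := lerP a ((fx - fxs) / sqnorm2 g).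
  rewrite mulrC.
  apply: (@alg1 _ a (fx - fxs) (h y - fxs) D t (sqnorm2 g)) => //.
  by rewrite -ler_pdivlMr.
rewrite mulrA ler_pdivrMr // [X in _ <= X]mulrC.
apply: (@alg2 _ a (fx - fxs) (h y - fxs) D t (sqnorm2 g)) => //.
by rewrite -ltr_pdivrMr.
Qed.
Theorem lemma1 (R : realType) (n : nat)
  (d d' : measure_display) (Omega : measurableType d) (T : measurableType d')
  (Q : probability Omega R) (P : probability T R)
  (X : set 'rV[R]_n) (f : 'rV[R]_n -> T -> R) (rho : T -> R)
  (fm : 'rV[R]_n -> 'rV[R]_n -> T -> R)
  (S : nat -> Omega -> T) (alpha : nat -> R)
  (x1 : 'rV[R]_n) (x : nat -> Omega -> 'rV[R]_n) :
  closed X -> convex_set X ->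
  (forall s, weakly_convex_on X (rho s) (fun y => f y s)) ->
  (forall y, X y -> P.-integrable setT (fun s => (f y s)%:E)) ->
  (exists xs, solution_set X P f xs) ->
  (* F is easy to optimize *)
  (forall xs, solution_set X P f xs ->
     {ae P, forall s, inf_over X (fun z => f z s) = (f xs s)%:E}) ->
  is_model X f rho fm ->
  iid_with_law Q S P ->
  X x1 -> (forall w, x 1%N w = x1) ->
  (forall k, (1 <= k)%N -> 0 < alpha k) ->
  (forall k w, (1 <= k)%N ->
     is_argmin X (fun y => fm (x k w) y (S k w)
                           + 1 / (2 * alpha k) * sqnorm2 (y - x k w)) (x k.+1 w)) ->
  forall xs, solution_set X P f xs ->
  forall k, (1 <= k)%N ->
  {ae Q, forall w, forall g,
     frechet_subdiff X (fun y => fm (x k w) y (S k w)) (x k w) g ->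
     let gap := f (x k w) (S k w) - f xs (S k w) in
     sqnorm2 (x k.+1 w - xs)
       <= (1 + alpha k * rho (S k w)) * sqnorm2 (x k w - xs)
          - gap * (if g == 0 then alpha k
                   else Num.min (alpha k) (gap / sqnorm2 g))}.
Proof.
move=> clX cX wc integ exs Hae Hm [mS [Hlaw _]] Xx1 Hx1 apos Hstep xs Hxs k k1.
have Xk : forall w, X (x k w).
  move=> w; case: k k1 {Hlaw} => [//|[|k']] _; first by rewrite Hx1.
  by case: (Hstep k'.+1 w isT).
have [N [mN PN0 HN]] := Hae xs Hxs.
exists (S k @^-1` N); split.
- by have := mS k measurableT N mN; rewrite setTI.
- by rewrite Hlaw.
move=> w /= nP.
case: (pselect (N (S k w))) => // nN; exfalso; apply: nP.
have Einf : inf_over X (fun z => f z (S k w)) = (f xs (S k w))%:E.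
  case: (pselect (inf_over X (fun z => f z (S k w)) = (f xs (S k w))%:E)) => // ne.
  by case: nN; apply: HN.
move=> g Hg /=.
have [[hc _] [C2 [[C3a _] C4]]] := Hm (x k w) (S k w) (Xk w).
have [Xy _] := Hstep k w k1.
have [Xxs _] := Hxs.
apply: (@key _ _ X (fun y => fm (x k w) y (S k w)) (x k w) (x k.+1 w) xs g (alpha k) (rho (S k w)))
  => //.
- exact: apos.
- exact: Hstep.
- exact: C2.
- by have := C4 _ Xy; rewrite Einf lee_fin.
- have : (inf_over X (fun z => f z (S k w)) <= (f (x k w) (S k w))%:E)%E.
    by apply: ereal_inf_lbound; exists (x k w).
  by rewrite Einf lee_fin.
Qed.
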